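(* Let $k\ge 0$ be an integer and let $G$ be a graph with $m$ edges, where $m\ge\max\{(k^2+2k+2)^2+k+1,\,(2k+3)^2+k+1\}$. If $\rho(G)\ge\sqrt{m-k}$, then $G$ contains $K_{1,m-k}$ as a subgraph or $G$ contains $C_4$ as a subgraph.
   Context: All graphs are finite, simple and undirected. $\rho(G)$ denotes the spectral radius (largest eigenvalue) of the adjacency matrix $A(G)$ of $G$. $K_{1,t}$ denotes the star with $t$ edges (on $t+1$ vertices) and $C_4$ the cycle on $4$ vertices. ''Contains as a subgraph'' means not necessarily induced. *)

(* Defs.v *)
From HB Require Import structures.
From mathcomp Require Import all_boot all_order all_algebra.
From mathcomp Require Import reals.
Set Implicit Arguments. Unset Strict Implicit. Unset Printing Implicit Defensive.
Import Order.TTheory GRing.Theory Num.Theory.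
Local Open Scope ring_scope.

Definition simple_graph (n : nat) (E : {set {set 'I_n}}) : Prop :=
  forall s, s \in E -> #|s| = 2%N.

Definition adj (n : nat) (E : {set {set 'I_n}}) (x y : 'I_n) : bool :=
  (x != y) && ([set x; y] \in E).

Definition adjmx (R : realType) (n : nat) (E : {set {set 'I_n}}) : 'M[R]_n :=
  \matrix_(i, j) (adj E i j)%:R.

Definition is_spectral_radius (R : realType) (n : nat) (A : 'M[R]_n) (r : R) : Prop :=
  eigenvalue A r /\ forall l, eigenvalue A l -> l <= r.

Definition contains_star (n : nat) (E : {set {set 'I_n}}) (t : nat) : Prop :=
  exists (c : 'I_n) (f : 'I_t -> 'I_n),
    injective f /\ forall i, f i != c /\ adj E c (f i).

Definition contains_C4 (n : nat) (E : {set {set 'I_n}}) : Prop :=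
  exists a b c d : 'I_n,
    [/\ uniq [:: a; b; c; d], adj E a b, adj E b c, adj E c d & adj E d a].

(* Main.v *)
Require Import Defs.
From HB Require Import structures.
From mathcomp Require Import all_boot all_order all_algebra.
From mathcomp Require Import reals.
From mathcomp Require Import ring lra.
From Stdlib Require Classical_Prop.
Import Order.TTheory GRing.Theory Num.Theory.

Section G.
Variables (n : nat) (E : {set {set 'I_n}}).
Hypothesis hs : simple_graph E.

Lemma adj_sym i j : adj E i j = adj E j i.
Proof. by rewrite /adj eq_sym setUC. Qed.

Lemma adj_irr i : adj E i i = false.
Proof. by rewrite /adj eqxx. Qed.

Lemma deg_card z : (\sum_t (adj E z t : nat) = #|[set e in E | z \in e]|)%N.
Proof.
have -> : (\sum_t (adj E z t : nat) = \sum_(t | adj E z t) 1)%N.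
  by rewrite [RHS]big_mkcond /=; apply: eq_bigr => t _; case: (adj E z t).
rewrite sum1dep_card.
have -> : [set e in E | z \in e] = [set [set z; t] | t in [set t | adj E z t]].
  apply/setP => e; rewrite !inE; apply/andP/imsetP.
    move=> [he hz]; have /cards2P [x [y [hxy he']]] : #|e| == 2 by rewrite hs.
    subst e; move: hz; rewrite !inE => /orP [] /eqP ->.
      by exists y => //; rewrite inE /adj hxy.
    exists x; last by rewrite setUC.
    by rewrite inE /adj eq_sym hxy /= setUC.
  move=> [t]; rewrite inE => /andP [hzt ht] ->.
  by rewrite ht !inE eqxx.
rewrite card_in_imset //.
move=> t1 t2; rewrite !inE => /andP [h1 _] /andP [h2 _] heq.
have : t1 \in [set z; t2] by rewrite -heq !inE eqxx orbT.
by rewrite !inE eq_sym (negbTE h1) /= => /eqP.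
Qed.

Lemma handshake : (\sum_z \sum_t (adj E z t : nat) = 2 * #|E|)%N.
Proof.
under eq_bigr do rewrite deg_card.
have -> : (\sum_z #|[set e in E | z \in e]| = \sum_z \sum_(e in E) (z \in e : nat))%N.
  apply: eq_bigr => z _.
  rewrite -sum1_card big_mkcond /= [RHS]big_mkcond /=.
  by apply: eq_bigr => e _; rewrite inE; case: (e \in E); case: (z \in e).
rewrite exchange_big /= -sum1_card big_distrr /=.
apply: eq_bigr => e he.
rewrite muln1 -(hs _ he) -sum1_card [RHS]big_mkcond /=.
by apply: eq_bigr => z _; case: (z \in e).
Qed.
End G.

Local Open Scope ring_scope.

Section Abs.
Variables (R : realType) (n : nat) (a : 'I_n -> 'I_n -> R) (u : 'I_n)
  (y : 'I_n -> R) (rho m : R).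
Hypothesis a01 : forall i j, a i j = 0 \/ a i j = 1.
Hypothesis asym : forall i j, a i j = a j i.
Hypothesis adiag : forall i, a i i = 0.
Hypothesis hand : \sum_z \sum_t a z t = 2 * m.
Let c z := \sum_w a u w * a w z.
Hypothesis c01 : forall z, z != u -> c z = 0 \/ c z = 1.
Hypothesis hy0 : forall i, 0 <= y i.
Hypothesis hy1 : forall i, y i <= 1.
Hypothesis hyu : y u = 1.
Hypothesis hr0 : 0 <= rho.
Hypothesis hev : forall j, rho * y j <= \sum_i a j i * y i.
Let d := \sum_t a u t.
Let S := \sum_(z | z != u) c z * y z.

Lemma eqle (x z : R) : x = z -> x <= z. Proof. by move->. Qed.

Lemma a_ge0 i j : 0 <= a i j. Proof. by case: (a01 i j) => ->. Qed.
Lemma a_le1 i j : a i j <= 1. Proof. by case: (a01 i j) => ->. Qed.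
Lemma a_sq i j : a i j * a i j = a i j.
Proof. by case: (a01 i j) => ->; rewrite ?mulr0 ?mulr1. Qed.

Lemma c_ge0 z : 0 <= c z.
Proof. by apply: sumr_ge0 => w _; apply: mulr_ge0; apply: a_ge0. Qed.

Lemma S_ge0 : 0 <= S.
Proof. by apply: sumr_ge0 => z _; apply: mulr_ge0; [apply: c_ge0|apply: hy0]. Qed.

Lemma step1 : rho ^+ 2 <= d + S.
Proof.
have -> : rho ^+ 2 = rho * (rho * y u) by rewrite hyu mulr1 expr2.
apply: (le_trans (ler_wpM2l hr0 (hev u))).
rewrite mulr_sumr.
apply: (@le_trans _ _ (\sum_i a u i * \sum_z a i z * y z)).
  apply: ler_sum => i _; rewrite mulrCA; apply: ler_wpM2l; first exact: a_ge0.
  exact: hev.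
under eq_bigr do rewrite mulr_sumr.
rewrite exchange_big /=.
rewrite (bigD1 u) //= /S /d.
apply: lerD.
  apply: eqle; rewrite hyu; apply/eq_bigr => i _.
  by rewrite mulr1 (asym i u) a_sq.
apply: eqle; apply/eq_bigr => z _; rewrite /c big_distrl /=.
by apply: eq_bigr => i _; rewrite mulrA.
Qed.

Let D z := \sum_(t | t != u) a z t.
Let Q z := \sum_t a u t * a z t * y t.

Lemma D_ge0 z : 0 <= D z.
Proof. by apply: sumr_ge0 => t _; apply: a_ge0. Qed.

Lemma Q_ge0 z : 0 <= Q z.
Proof. by apply: sumr_ge0 => t _; apply: mulr_ge0; [apply: mulr_ge0; apply: a_ge0|apply: hy0]. Qed.

Lemma Q_le_c z : Q z <= c z.
Proof.
apply: ler_sum => t _; rewrite (asym t z).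
rewrite -[X in _ <= X]mulr1; apply: ler_wpM2l; last exact: hy1.
by apply: mulr_ge0; apply: a_ge0.
Qed.

Lemma PQ z : \sum_t a z t * y t <= Q z + (D z + a z u - c z).
Proof.
have hdeg : D z + a z u = \sum_t a z t by rewrite [RHS](bigD1 u) //= addrC.
rewrite hdeg /Q /c -lerBlDl -!sumrB.
apply: ler_sum => t _.
rewrite (asym t z) (mulrC (a u t) (a z t)).
have h1 : 0 <= a z t * (1 - a u t) by apply: mulr_ge0; [apply: a_ge0|rewrite subr_ge0 a_le1].
have h2 : 0 <= 1 - y t by rewrite subr_ge0 hy1.
have := mulr_ge0 h1 h2. lra.
Qed.

Lemma perz z : z != u -> c z * \sum_t a z t * y t <= D z + a u z * Q z.
Proof.
move=> hz.
have hP := PQ z; have hQ := Q_le_c z; have hD := D_ge0 z; have hQ0 := Q_ge0 z.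
rewrite (asym u z).
case: (c01 z hz) => hc; rewrite hc in hP hQ *.
  rewrite mul0r; apply: addr_ge0 => //; apply: mulr_ge0 => //; exact: a_ge0.
rewrite mul1r.
case: (a01 z u) => ha; rewrite ha in hP *; lra.
Qed.

Lemma step2 : rho * S <= 2 * (m - d) + S.
Proof.
apply: (@le_trans _ _ (\sum_(z | z != u) (D z + a u z * Q z))).
  rewrite /S mulr_sumr; apply: ler_sum => z hz.
  apply: le_trans (perz z hz).
  rewrite mulrCA; apply: ler_wpM2l; first exact: c_ge0.
  exact: hev.
rewrite big_split /=; apply: lerD.
  apply: eqle.
  have hsD : \sum_z D z = 2 * m - d.
    rewrite -hand /d.
    have -> : \sum_t a u t = \sum_z a z u by apply: eq_bigr => t _; rewrite asym.
    rewrite -sumrB; apply: eq_bigr => z _.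
    by rewrite /D [X in _ = X - _](bigD1 u) //= addrC addrK.
  have hDu : D u = d.
    by rewrite /D /d [in RHS](bigD1 u) //= adiag add0r.
  move: hsD; rewrite (bigD1 u) //= hDu => hsD.
  have -> : \sum_(z | z != u) D z = 2 * m - d - d by rewrite -hsD addrC addrK.
  lra.
apply: (@le_trans _ _ (\sum_z a u z * Q z)).
  by rewrite [X in _ <= X](bigD1 u) //= adiag mul0r add0r.
rewrite /Q.
under eq_bigr do rewrite mulr_sumr.
rewrite exchange_big /= /S.
rewrite (bigD1 u) //=.
have -> : \sum_i a u i * (a u u * a i u * y u) = 0.
  by apply: big1 => i _; rewrite adiag !mul0r mulr0.
rewrite add0r.
apply: ler_sum => t ht.
have -> : \sum_i a u i * (a u t * a i t * y t) = a u t * (c t * y t).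
  rewrite /c big_distrl big_distrr /=; apply: eq_bigr => i _.
  by rewrite (asym i t); ring.
rewrite -[X in _ <= X]mul1r; apply: ler_wpM2r; last exact: a_le1.
by apply: mulr_ge0; [apply: c_ge0|apply: hy0].
Qed.
End Abs.

Lemma deg_set n (E : {set {set 'I_n}}) z :
  (\sum_t (adj E z t : nat) = #|[set t | adj E z t]|)%N.
Proof.
have -> : (\sum_t (adj E z t : nat) = \sum_(t | adj E z t) 1)%N.
  by rewrite [RHS]big_mkcond /=; apply: eq_bigr => t _; case: (adj E z t).
by rewrite sum1dep_card.
Qed.

Lemma sumr_bool (R : realType) n (b : 'I_n -> bool) :
  \sum_t ((b t)%:R : R) = (#|[set t | b t]|)%:R.
Proof.
rewrite -sum1dep_card natr_sum [RHS]big_mkcond /=.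
by apply: eq_bigr => t _; case: (b t).
Qed.

Theorem theorem1p4 (R : realType) (k n : nat) (E : {set {set 'I_n}}) (rho : R) :
  simple_graph E ->
  (maxn ((k ^ 2 + 2 * k + 2) ^ 2 + k + 1) ((2 * k + 3) ^ 2 + k + 1) <= #|E|)%N ->
  is_spectral_radius (adjmx R E) rho ->
  Num.sqrt (#|E|%:R - k%:R) <= rho ->
  contains_star E (#|E| - k) \/ contains_C4 E.
Proof.
move=> hs hm [/eigenvalueP [v hv hv0] _] hsq.
have hB : ((2 * k + 3) ^ 2 + k + 1 <= #|E|)%N by apply: leq_trans hm; rewrite leq_maxr.
have hBR : ((2 * k + 3) ^ 2 + k + 1)%:R <= (#|E|%:R : R) by rewrite ler_nat.
rewrite !natrD natrX natrD natrM in hBR.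
set mR := (#|E|%:R : R) in hBR hsq *.
set kR := (k%:R : R) in hBR hsq *.
have hk0 : 0 <= kR by rewrite /kR ler0n.
have hx0 : 0 <= mR - kR by nra.
have hsq0 := sqrtr_ge0 (mR - kR).
have hr0 : 0 <= rho by apply: le_trans hsq.
have hr2 : mR - kR <= rho ^+ 2.
  rewrite -(sqr_sqrtr hx0) !expr2; nra.
have hrk : 2 * kR + 3 < rho.
  rewrite ltNge; apply/negP => hle.
  have : rho ^+ 2 <= (2 * kR + 3) ^+ 2 by rewrite !expr2; nra.
  nra.
have [i0 hi0] : exists i, v 0 i != 0.
  case: (pickP (fun i => v 0 i != 0)) => [i hi | h]; first by exists i.
  exfalso; move/negP: hv0; apply; apply/eqP/matrixP => i j.
  by rewrite ord1 mxE; move: (h j) => /negbFE/eqP.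
pose F i := `|v 0 i|.
have [u hu] : exists u, forall i, F i <= F u.
  case: (@arg_maxP _ R _ i0 xpredT F isT) => u _ hu.
  by exists u => i; apply: hu.
have hvu : 0 < F u.
  apply: lt_le_trans (hu i0); by rewrite /F normr_gt0.
pose a i j := ((adj E i j)%:R : R).
pose y i := F i / F u.
have a01 : forall i j, a i j = 0 \/ a i j = 1.
  by move=> i j; rewrite /a; case: (adj E i j); [right|left].
have asym : forall i j, a i j = a j i by move=> i j; rewrite /a adj_sym.
have adiag : forall i, a i i = 0 by move=> i; rewrite /a adj_irr.
have hand : \sum_z \sum_t a z t = 2 * mR.
  rewrite /mR /a.
  rewrite (eq_bigr (fun z => (\sum_t (adj E z t : nat))%:R)); last first.
    by move=> z _; rewrite natr_sum.
  by rewrite -natr_sum handshake // natrM.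
have hy0 : forall i, 0 <= y i.
  by move=> i; apply: divr_ge0; [exact: normr_ge0 | exact: ltW].
have hy1 : forall i, y i <= 1.
  by move=> i; rewrite /y ler_pdivrMr // mul1r.
have hyu : y u = 1 by rewrite /y divff // gt_eqF.
have hev : forall j, rho * y j <= \sum_i a j i * y i.
  move=> j.
  have e := congr1 (fun M : 'rV[R]_n => M 0 j) hv; rewrite /= !mxE in e.
  have h1 : rho * F j <= \sum_i a j i * F i.
    rewrite /F -(ger0_norm hr0) -normrM -e.
    apply: le_trans (ler_norm_sum _ _ _) _.
    apply: ler_sum => i _; rewrite mxE normrM mulrC.
    by rewrite -/(a i j) asym ger0_norm //; case: (a01 j i) => ->.
  rewrite /y mulrA.
  under eq_bigr do rewrite mulrA.
  rewrite -mulr_suml; apply: ler_wpM2r => //.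
  by rewrite invr_ge0 ltW.
set N := [set t | adj E u t].
have hd : \sum_t a u t = (#|N|)%:R by rewrite /a sumr_bool.
case: (leqP (#|E| - k) #|N|) => hN.
  left; exists u, (fun i => enum_val (widen_ord hN i)); split.
    move=> i j /enum_val_inj /(congr1 val) /= h; exact: val_inj.
  move=> i; have := enum_valP (widen_ord hN i); rewrite inE => h.
  by split => //; move: (h) => /andP [h' _]; rewrite eq_sym.
right; case: (Classical_Prop.classic (contains_C4 E)) => // hno; exfalso.
pose c z := \sum_w a u w * a w z.
have c01 : forall z, z != u -> c z = 0 \/ c z = 1.
  move=> z hz.
  have -> : c z = #|[set w | adj E u w && adj E w z]|%:R.
    rewrite -sumr_bool /c; apply: eq_bigr => w _.
    by rewrite /a -natrM mulnb.
  have : (#|[set w | adj E u w && adj E w z]| <= 1)%N.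
    apply/card_le1_eqP => w1 w2; rewrite !inE => /andP [h1 h2] /andP [h3 h4].
    case: (w1 =P w2) => // /eqP hne; exfalso; apply: hno.
    exists u, w1, z, w2.
    move: (h1) (h2) (h3) (h4) => /andP [e1 _] /andP [e2 _] /andP [e3 _] /andP [e4 _].
    split => //.
    - rewrite /= !inE !negb_or e1 e3 e2 hne /= andbT.
      by rewrite eq_sym hz /= eq_sym e4.
    - by rewrite adj_sym.
    - by rewrite adj_sym.
  by case: #|_| => [|[|//]] _; [left|right].
have h1 := @step1 _ _ a u y rho a01 asym hyu hr0 hev.
have h2 := @step2 _ _ a u y rho mR a01 asym adiag hand c01 hy0 hy1 hev.
have h0 := @S_ge0 _ _ a u y a01 hy0.
rewrite -/c in h1 h2 h0.
move: h1 h2 h0; rewrite hd.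
set S := \sum_(z | z != u) c z * y z => h1 h2 h0.
rewrite ltn_subRL in hN.
have hNR : (k + #|N|).+1%:R <= mR by rewrite /mR ler_nat.
rewrite -addn1 !natrD -/kR in hNR.
set dR := (#|N|%:R : R) in h1 h2 hNR.
have p1 : 0 <= (rho - 1) * (S - (mR - dR - kR)) by apply: mulr_ge0; lra.
have p2 : 0 <= (rho - 3) * (mR - dR - kR - 1) by apply: mulr_ge0; lra.
move: h1 h2 h0 hNR p1 p2 hrk hr2 hk0.
clear.
move=> h1 h2 h0 hNR p1 p2 hrk hr2 hk0.
nra.
Qed.
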